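(* Let $\mathbf{D}=[\mathbf{B}\ \mathbf{A}]\mathbf{T}\in\mathbb{R}^{M_1\times M_2}$ follow Data Model 1 (context), with unit $\ell_2$-norm columns. Let $\mathbf{d}$ be one of the columns of $\mathbf{B}$, let $\hat{\mathbf{c}}$ be the optimal point of $$\min_{\mathbf{c}}\|\mathbf{c}^T\mathbf{D}\|_1\ \text{ s.t. }\ \mathbf{c}^T\mathbf{d}=1,\ \mathbf{c}\in\mathcal{U}^\perp,$$ let $\mathcal{I}_0=\{i\in[M_2]:\hat{\mathbf{c}}^T\mathbf{d}_i=0,\ \mathbf{d}_i\text{ a column of }\mathbf{B}\}$, $\mathbf{d}^\perp=(\mathbf{I}-\mathbf{U}\mathbf{U}^T)\mathbf{d}/\|(\mathbf{I}-\mathbf{U}\mathbf{U}^T)\mathbf{d}\|_2$, and $\mathbf{o}=\sum_{\mathbf{d}_i\in\mathbf{B}}\mathrm{sgn}(\hat{\mathbf{c}}^T\mathbf{d}_i)\,\mathbf{d}_i$. If $$\frac12\inf_{\boldsymbol\delta\in\mathcal{U},\|\boldsymbol\delta\|_2=1}\sum_{\mathbf{d}_i\in\mathbf{A}}|\boldsymbol\delta^T\mathbf{d}_i|>\sup_{\boldsymbol\delta\in\mathcal{U},\|\boldsymbol\delta\|=1}\sum_{\mathbf{d}_i\in\mathbf{B},\,i\in\mathcal{I}_0}|\boldsymbol\delta^T\mathbf{d}_i|+\|\mathbf{U}^T\mathbf{o}\|_2$$ and $$\inf_{\boldsymbol\delta\in\mathcal{U},\|\boldsymbol\delta\|_2=1}\sum_{\mathbf{d}_i\in\mathbf{A}}|\boldsymbol\delta^T\mathbf{d}_i|>\frac{2\|\mathbf{d}^T\mathbf{U}\|_2}{\sqrt{1-\|\mathbf{d}^T\mathbf{U}\|_2^2}}\Big(\mathbf{o}^T\mathbf{d}^\perp+\sum_{\mathbf{d}_i\in\mathbf{B},\,i\in\mathcal{I}_0}|\mathbf{d}_i^T\mathbf{d}^\perp|\Big),$$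 then $$\arg\min_{\mathbf{c}\in\mathcal{U}^\perp,\ \mathbf{d}^T\mathbf{c}=1}\|\mathbf{c}^T\mathbf{D}\|_1=\arg\min_{\mathbf{d}^T\mathbf{c}=1}\|\mathbf{c}^T\mathbf{D}\|_1 .$$
   Context: Data Model 1: $\mathbf{D}=[\mathbf{B}\ \mathbf{A}]\mathbf{T}$, where $\mathbf{T}$ is a permutation matrix, $\mathbf{A}\in\mathbb{R}^{M_1\times n_i}$ has columns (inliers) lying in an $r$-dimensional subspace $\mathcal{U}$ with orthonormal basis $\mathbf{U}\in\mathbb{R}^{M_1\times r}$, and $\mathbf{B}\in\mathbb{R}^{M_1\times n_o}$ has columns (outliers) not lying in $\mathcal{U}$. The columns of $\mathbf{D}$ are $\mathbf{d}_1,\dots,\mathbf{d}_{M_2}$; ''$\mathbf{d}_i\in\mathbf{A}$'' (''$\in\mathbf{B}$'') means $\mathbf{d}_i$ is a column of $\mathbf{A}$ (of $\mathbf{B}$). $\mathcal{U}^\perp$ is the orthogonal complement of $\mathcal{U}$. *)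

(* Defs.v *)
From HB Require Import structures.
From mathcomp Require Import all_boot all_order all_algebra.
From mathcomp Require Import boolp classical_sets reals.
Set Implicit Arguments. Unset Strict Implicit. Unset Printing Implicit Defensive.
Import Order.TTheory GRing.Theory Num.Theory.
Local Open Scope ring_scope.
Local Open Scope classical_set_scope.

Section Defs.
Variable R : realType.

Definition dotv n (u v : 'cV[R]_n) : R := \sum_(i < n) u i 0 * v i 0.

Definition norm2 n (v : 'cV[R]_n) : R := Num.sqrt (dotv v v).

Definition l1obj m n (D : 'M[R]_(m, n)) (c : 'cV[R]_m) : R :=
  \sum_(j < n) `| dotv c (col j D) |.

Definition inSub m r (U : 'M[R]_(m, r)) (v : 'cV[R]_m) : Prop :=
  exists x : 'cV[R]_r, v = U *m x.

Definition inPerp m r (U : 'M[R]_(m, r)) (c : 'cV[R]_m) : Prop :=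
  U^T *m c = 0.

Definition subSphere m r (U : 'M[R]_(m, r)) : set 'cV[R]_m :=
  [set δ | inSub U δ /\ norm2 δ = 1].

Definition argmin (T : Type) (S : set T) (f : T -> R) : set T :=
  [set x | S x /\ forall y, S y -> f x <= f y].

(* Data Model 1: D = [B A] T.  The permutation T is encoded by the index set
   IA of the columns of D that are columns of A (inliers); the remaining
   columns are those of B (outliers). *)
Definition DataModel1 m n r (D : 'M[R]_(m, n)) (U : 'M[R]_(m, r))
    (IA : {set 'I_n}) : Prop :=
  [/\ U^T *m U = 1%:M,
      (forall i, i \in IA -> inSub U (col i D)) &
      (forall i, i \notin IA -> ~ inSub U (col i D))].

End Defs.

(* Main.v *)
Require Import Defs.
From HB Require Import structures.
From mathcomp Require Import all_boot all_order all_algebra.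
From mathcomp Require Import boolp classical_sets reals.
From mathcomp Require Import ring lra.
Import Order.TTheory GRing.Theory Num.Theory.
Local Open Scope ring_scope.
Local Open Scope classical_set_scope.
Set Implicit Arguments. Unset Strict Implicit.

Lemma dotvE (R : realType) n (u v : 'cV[R]_n) : dotv u v = (u^T *m v) 0 0.
Proof. by rewrite /dotv !mxE; apply: eq_bigr => i _; rewrite !mxE. Qed.

Lemma dotvC (R : realType) n (u v : 'cV[R]_n) : dotv u v = dotv v u.
Proof. by apply: eq_bigr => i _; rewrite mulrC. Qed.

Lemma dotvDl (R : realType) n (u v w : 'cV[R]_n) : dotv (u + v) w = dotv u w + dotv v w.
Proof. by rewrite /dotv -big_split; apply: eq_bigr => i _; rewrite !mxE mulrDl. Qed.

Lemma dotvDr (R : realType) n (u v w : 'cV[R]_n) : dotv w (u + v) = dotv w u + dotv w v.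
Proof. by rewrite dotvC dotvDl !(dotvC w). Qed.

Lemma dotvZl (R : realType) n a (u w : 'cV[R]_n) : dotv (a *: u) w = a * dotv u w.
Proof. by rewrite /dotv mulr_sumr; apply: eq_bigr => i _; rewrite !mxE mulrA. Qed.

Lemma dotvZr (R : realType) n a (u w : 'cV[R]_n) : dotv w (a *: u) = a * dotv w u.
Proof. by rewrite dotvC dotvZl dotvC. Qed.

Lemma dotvNl (R : realType) n (u w : 'cV[R]_n) : dotv (- u) w = - dotv u w.
Proof. by rewrite -scaleN1r dotvZl mulN1r. Qed.

Lemma dotvNr (R : realType) n (u w : 'cV[R]_n) : dotv w (- u) = - dotv w u.
Proof. by rewrite dotvC dotvNl dotvC. Qed.

Lemma dotvBl (R : realType) n (u v w : 'cV[R]_n) : dotv (u - v) w = dotv u w - dotv v w.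
Proof. by rewrite dotvDl dotvNl. Qed.

Lemma dotvBr (R : realType) n (u v w : 'cV[R]_n) : dotv w (u - v) = dotv w u - dotv w v.
Proof. by rewrite dotvDr dotvNr. Qed.

Lemma dotv0l (R : realType) n (w : 'cV[R]_n) : dotv 0 w = 0.
Proof. by rewrite /dotv big1 // => i _; rewrite mxE mul0r. Qed.

Lemma dotv0r (R : realType) n (w : 'cV[R]_n) : dotv w 0 = 0.
Proof. by rewrite dotvC dotv0l. Qed.

Lemma dotv_sumr (R : realType) n (I : finType) (P : pred I) (F : I -> 'cV[R]_n) w :
  dotv w (\sum_(i | P i) F i) = \sum_(i | P i) dotv w (F i).
Proof.
apply: (big_ind2 (fun a b => dotv w a = b)); first exact: dotv0r.
  by move=> ? ? ? ? <- <-; rewrite dotvDr.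
by [].
Qed.

Lemma dotv_mul (R : realType) m n (A : 'M[R]_(m, n)) u v :
  dotv u (A *m v) = dotv (A^T *m u) v.
Proof. by rewrite !dotvE trmx_mul trmxK mulmxA. Qed.

Lemma dotv_ge0 (R : realType) n (v : 'cV[R]_n) : 0 <= dotv v v.
Proof. by apply: sumr_ge0 => i _; rewrite -expr2 sqr_ge0. Qed.

Lemma dotv_eq0 (R : realType) n (v : 'cV[R]_n) : dotv v v = 0 -> v = 0.
Proof.
move=> /eqP; rewrite psumr_eq0; last by move=> i _; rewrite -expr2 sqr_ge0.
move=> /allP H; apply/matrixP => i j; rewrite ord1 mxE.
by have /implyP/(_ isT) := H i (mem_index_enum i); rewrite mulf_eq0 orbb => /eqP.
Qed.

Lemma norm2_ge0 (R : realType) n (v : 'cV[R]_n) : 0 <= norm2 v.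
Proof. exact: sqrtr_ge0. Qed.

Lemma norm2_sq (R : realType) n (v : 'cV[R]_n) : norm2 v ^+ 2 = dotv v v.
Proof. by rewrite sqr_sqrtr // dotv_ge0. Qed.

Lemma norm2_eq0 (R : realType) n (v : 'cV[R]_n) : norm2 v = 0 -> v = 0.
Proof. by move=> H; apply: dotv_eq0; rewrite -norm2_sq H expr0n. Qed.

Lemma CS (R : realType) n (u v : 'cV[R]_n) : `|dotv u v| <= norm2 u * norm2 v.
Proof.
suff H : dotv u v ^+ 2 <= dotv u u * dotv v v.
  rewrite /norm2 -sqrtrM ?dotv_ge0 // -sqrtr_sqr ler_sqrt //.
  by apply: mulr_ge0; apply: dotv_ge0.
have [a0|] := eqVneq (dotv v v) 0.
  by rewrite a0 mulr0 (dotv_eq0 a0) dotv0r expr0n.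
move=> an0.
have apos : 0 < dotv v v by rewrite lt_def an0 dotv_ge0.
have := dotv_ge0 (dotv v v *: u - dotv u v *: v).
rewrite !(dotvBl, dotvBr, dotvZl, dotvZr) (dotvC v u).
set a := dotv v v; set b := dotv u v; set c := dotv u u => H.
have H2 : 0 <= a * (a * c - b ^+ 2).
  by move: H; have -> : a * (a * c - b * b) - b * (a * b - b * a) = a * (a * c - b ^+ 2) by ring.
rewrite pmulr_rge0 // subr_ge0 in H2.
by rewrite mulrC.
Qed.

Lemma sg_mul_self (R : realType) (a : R) : Num.sg a * a = `|a|.
Proof.
case: (ltrgtP a 0) => [H|H|->]; last by rewrite sgr0 normr0 mul0r.
  by rewrite ltr0_sg // ltr0_norm // mulN1r.
by rewrite gtr0_sg // gtr0_norm // mul1r.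
Qed.

Lemma term_glob (R : realType) (a b : R) :
  `|a| + (Num.sg a * b + (a == 0)%:R * `|b|) <= `|a + b|.
Proof.
case: (ltrgtP a 0) => [H|H|->].
- rewrite ltr0_sg // ltr0_norm // mulr0n mul0r addr0 mulN1r.
  by rewrite -opprD ler_normr lexx orbT.
- rewrite gtr0_sg // gtr0_norm // mulr0n mul0r addr0 mul1r.
  by rewrite ler_normr lexx.
- by rewrite sgr0 normr0 ?eqxx mulr1n mul0r mul1r !add0r.
Qed.

Lemma term_loc (R : realType) (a b e : R) : 0 <= e -> (a != 0 -> e * `|b| <= `|a|) ->
  `|a + e * b| = `|a| + e * (Num.sg a * b + (a == 0)%:R * `|b|).
Proof.
move=> e0 Hab; have Hb1 : e * b <= e * `|b| by rewrite ler_wpM2l // ler_norm.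
have Hb2 : - (e * `|b|) <= e * b by rewrite -mulrN ler_wpM2l // lerNl -normrN ler_norm.
case: (ltrgtP a 0) => [H|H|->].
- have := Hab (ltr0_neq0 H); rewrite ltr0_sg // (ltr0_norm H) mulr0n mul0r addr0 mulN1r.
  move=> Hb; rewrite (ler0_norm (x := a + e * b)); last by lra.
  lra.
- have := Hab (lt0r_neq0 H); rewrite gtr0_sg // (gtr0_norm H) mulr0n mul0r addr0 mul1r.
  move=> Hb; rewrite (ger0_norm (x := a + e * b)); last by lra.
  lra.
- by rewrite sgr0 normr0 mulr1n mul0r mul1r !add0r normrM (ger0_norm e0).
Qed.

Lemma eps_exists (R : realType) (I : finType) (a b : I -> R) :
  exists2 e : R, 0 < e & forall i, a i != 0 -> e * `|b i| <= `|a i|.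
Proof.
set S := \sum_(i | a i != 0) `|b i| / `|a i|.
have S0 : 0 <= S by apply: sumr_ge0 => i _; rewrite divr_ge0.
exists (1 + S)^-1; first by rewrite invr_gt0; lra.
move=> i ai.
have ap : 0 < `|a i| by rewrite normr_gt0.
have H : `|b i| / `|a i| <= S.
  rewrite /S (bigD1 i) //= lerDl; apply: sumr_ge0 => j _; rewrite divr_ge0 //.
rewrite mulrC -ler_pdivlMr ?invr_gt0; last by lra.
rewrite invrK; rewrite ler_pdivrMr // in H.
have : `|a i| * S <= `|a i| * (1 + S) by rewrite ler_wpM2l //; lra.
by rewrite mulrC; apply: le_trans.
Qed.

Definition Gf (R : realType) m n (D : 'M[R]_(m, n)) (ch h : 'cV[R]_m) : R :=
  \sum_(j < n) (Num.sg (dotv ch (col j D)) * dotv h (col j D)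
     + (dotv ch (col j D) == 0)%:R * `|dotv h (col j D)|).

Lemma l1_glob (R : realType) m n (D : 'M[R]_(m, n)) ch h :
  l1obj D ch + Gf D ch h <= l1obj D (ch + h).
Proof.
rewrite /l1obj /Gf -big_split /=; apply: ler_sum => j _.
by rewrite dotvDl term_glob.
Qed.

Lemma l1_loc (R : realType) m n (D : 'M[R]_(m, n)) ch h :
  exists2 e : R, 0 < e & l1obj D (ch + e *: h) = l1obj D ch + e * Gf D ch h.
Proof.
have [e e0 He] := eps_exists (fun j : 'I_n => dotv ch (col j D)) (fun j => dotv h (col j D)).
exists e => //; rewrite /l1obj /Gf mulr_sumr -big_split /=; apply: eq_bigr => j _.
rewrite dotvDl dotvZl; apply: term_loc; [exact: ltW | exact: He].
Qed.

Lemma G_decomp (R : realType) m n (D : 'M[R]_(m, n)) (IA : {set 'I_n}) ch h :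
  (forall j, j \in IA -> dotv ch (col j D) = 0) ->
  Gf D ch h = dotv h (\sum_(i < n | i \notin IA) Num.sg (dotv ch (col i D)) *: col i D)
   + \sum_(i in [set i : 'I_n | (i \notin IA) && (dotv ch (col i D) == 0)]%SET) `|dotv h (col i D)|
   + \sum_(i in IA) `|dotv h (col i D)|.
Proof.
move=> HIA; rewrite dotv_sumr.
rewrite (big_mkcond (fun i => i \notin IA)) (big_mkcond (fun i => i \in _)) (big_mkcond (fun i => i \in IA)).
rewrite /Gf -!big_split /=; apply: eq_bigr => j _.
rewrite inE; case: (boolP (j \in IA)) => Hj /=.
  by rewrite HIA // sgr0 mul0r eqxx mulr1n mul1r !add0r.
rewrite dotvZr addr0; case: eqP => _ /=; first by rewrite mul1r.
by rewrite mul0r.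
Qed.

Lemma dotvUl (R : realType) m r (U : 'M[R]_(m, r)) x y : dotv (U *m x) y = dotv x (U^T *m y).
Proof. by rewrite dotvC dotv_mul dotvC. Qed.

Lemma norm2U (R : realType) m r (U : 'M[R]_(m, r)) x : U^T *m U = 1%:M ->
  norm2 (U *m x) = norm2 x.
Proof. by move=> hU; rewrite /norm2 dotvUl mulmxA hU mul1mx. Qed.

Lemma sphere_scale (R : realType) m r (U : 'M[R]_(m, r)) x : U^T *m U = 1%:M ->
  0 < norm2 x -> subSphere U (U *m ((norm2 x)^-1 *: x)).
Proof.
move=> hU nx; split; first by exists ((norm2 x)^-1 *: x).
rewrite norm2U // {1}/norm2 dotvZl dotvZr -norm2_sq.
by rewrite mulrA -expr2 -exprMn mulVf ?gt_eqF // expr1n sqrtr1.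
Qed.

Lemma sum_scale (R : realType) m n r (U : 'M[R]_(m, r)) (D : 'M[R]_(m, n)) (A : {set 'I_n}) s x :
  0 <= s -> \sum_(i in A) `|dotv (U *m (s *: x)) (col i D)| = s * \sum_(i in A) `|dotv (U *m x) (col i D)|.
Proof.
move=> s0; rewrite mulr_sumr; apply: eq_bigr => i _.
by rewrite -scalemxAr dotvZl normrM (ger0_norm s0).
Qed.

Lemma sum_at0 (R : realType) m n r (U : 'M[R]_(m, r)) (D : 'M[R]_(m, n)) (A : {set 'I_n}) x :
  norm2 x = 0 -> \sum_(i in A) `|dotv (U *m x) (col i D)| = 0.
Proof.
move=> /norm2_eq0 ->; rewrite mulmx0; apply: big1 => i _; by rewrite dotv0l normr0.
Qed.

Lemma inf_part (R : realType) m n r (U : 'M[R]_(m, r)) (D : 'M[R]_(m, n)) (A : {set 'I_n}) x :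
  U^T *m U = 1%:M ->
  norm2 x * inf [set (\sum_(i in A) `|dotv δ (col i D)|) | δ in subSphere U]
  <= \sum_(i in A) `|dotv (U *m x) (col i D)|.
Proof.
move=> hU; have [nx0|nxp] := eqVneq (norm2 x) 0.
  by rewrite nx0 mul0r sum_at0.
have nx : 0 < norm2 x by rewrite lt_def nxp norm2_ge0.
have Hl : has_lbound [set (\sum_(i in A) `|dotv δ (col i D)|) | δ in subSphere U].
  by exists 0 => z [δ _ <-]; apply: sumr_ge0 => i _.
have := ge_inf Hl (ex_intro2 _ _ _ (sphere_scale hU nx) erefl).
rewrite sum_scale ?invr_ge0 ?norm2_ge0 // => H.
have ni : 0 < (norm2 x)^-1 by rewrite invr_gt0.
rewrite -(ler_pM2l ni) mulrA mulVf ?gt_eqF // mul1r.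
by [].
Qed.

Lemma sup_part (R : realType) m n r (U : 'M[R]_(m, r)) (D : 'M[R]_(m, n)) (A : {set 'I_n}) x :
  U^T *m U = 1%:M -> (forall i, norm2 (col i D) = 1) ->
  \sum_(i in A) `|dotv (U *m x) (col i D)|
  <= norm2 x * sup [set (\sum_(i in A) `|dotv δ (col i D)|) | δ in subSphere U].
Proof.
move=> hU hn; have [nx0|nxp] := eqVneq (norm2 x) 0.
  by rewrite nx0 mul0r sum_at0.
have nx : 0 < norm2 x by rewrite lt_def nxp norm2_ge0.
have Hl : has_ubound [set (\sum_(i in A) `|dotv δ (col i D)|) | δ in subSphere U].
  exists (#|A|%:R) => z [δ [_ nδ] <-]; rewrite -sumr_const; apply: ler_sum => i _.
  by apply: le_trans (CS _ _) _; rewrite nδ hn mulr1.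
have := ub_le_sup Hl (ex_intro2 _ _ _ (sphere_scale hU nx) erefl).
rewrite sum_scale ?invr_ge0 ?norm2_ge0 // => H.
have ni : 0 < (norm2 x)^-1 by rewrite invr_gt0.
rewrite -(ler_pM2l ni) mulrA mulVf ?gt_eqF // mul1r.
by [].
Qed.

Theorem lemma9 (R : realType) (M1 M2 r : nat) (D : 'M[R]_(M1, M2))
  (U : 'M[R]_(M1, r)) (IA : {set 'I_M2}) (k : 'I_M2) (ch : 'cV[R]_M1) :
  DataModel1 D U IA ->
  (forall i : 'I_M2, norm2 (col i D) = 1) ->
  k \notin IA ->
  let d := col k D in
  argmin [set c | inPerp U c /\ dotv c d = 1] (l1obj D) ch ->
  let I0 := [set i : 'I_M2 | (i \notin IA) && (dotv ch (col i D) == 0)]%SET in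
  let dperp := (norm2 ((1%:M - U *m U^T) *m d))^-1 *: ((1%:M - U *m U^T) *m d) in
  let o := \sum_(i < M2 | i \notin IA) Num.sg (dotv ch (col i D)) *: col i D in
  let infA := inf [set (\sum_(i in IA) `|dotv δ (col i D)|) | δ in subSphere U] in
  let supB := sup [set (\sum_(i in I0) `|dotv δ (col i D)|) | δ in subSphere U] in
  infA / 2 > supB + norm2 (U^T *m o) ->
  infA > 2 * norm2 (U^T *m d) / Num.sqrt (1 - norm2 (U^T *m d) ^+ 2)
           * (dotv o dperp + \sum_(i in I0) `|dotv (col i D) dperp|) ->
  argmin [set c | inPerp U c /\ dotv d c = 1] (l1obj D)
  = argmin [set c | dotv d c = 1] (l1obj D).
Proof.
move=> [hU hIA hB] Hn Hk d [[Hchp Hchd] Hchmin] I0 dperp o infA supB H1 H2.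
rewrite /inPerp in Hchp.
have F0 : forall w, U^T *m w = 0 -> forall j, j \in IA -> dotv w (col j D) = 0.
  by move=> w Hw j Hj; have [z ->] := hIA j Hj; rewrite dotv_mul Hw dotv0l.
have HchIA := F0 ch Hchp.
have Hchd' : dotv d ch = 1 by rewrite dotvC.
have fch0 : 0 <= l1obj D ch by apply: sumr_ge0.
pose phi w := dotv w o + \sum_(i in I0) `|dotv w (col i D)|.
have Gdec : forall h, Gf D ch h = phi h + \sum_(i in IA) `|dotv h (col i D)|.
  by move=> h; rewrite (G_decomp h HchIA).
have Gw : forall w, U^T *m w = 0 -> Gf D ch w = phi w.
  move=> w Hw; rewrite Gdec big1 ?addr0 // => i Hi; by rewrite F0 // normr0.
have HA : forall w, U^T *m w = 0 -> dotv d w = 0 -> 0 <= phi w.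
  move=> w Hw Hdw; have [e e0 He] := l1_loc D ch w.
  have feas : [set c | inPerp U c /\ dotv c d = 1] (ch + e *: w).
    split; first by rewrite /inPerp mulmxDr -scalemxAr Hchp Hw scaler0 addr0.
    by rewrite dotvDl dotvZl (dotvC w) Hdw mulr0 addr0.
  have := Hchmin _ feas; rewrite He -Gw // lerDl => H.
  by rewrite -(pmulr_rge0 _ e0).
have ocf : dotv ch o = l1obj D ch.
  rewrite dotv_sumr /l1obj (big_mkcond (fun i => i \notin IA)) /=; apply: eq_bigr => j _.
  case: ifP => Hj; first by rewrite dotvZr sg_mul_self.
  by move/negbFE: Hj => Hj; rewrite HchIA // normr0.
have HB : forall w, U^T *m w = 0 -> dotv d w * l1obj D ch <= phi w.
  move=> w Hw; set t := dotv d w.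
  have := HA (w - t *: ch) _ _.
  have -> : phi (w - t *: ch) = phi w - t * l1obj D ch.
    rewrite /phi dotvBl dotvZl ocf -addrA addrAC addrA; congr (_ + _).
    apply: eq_bigr => i; rewrite inE => /andP [_ /eqP Hi].
    by rewrite dotvBl dotvZl Hi mulr0 subr0.
  rewrite subr_ge0; apply.
    by rewrite mulmxBr -scalemxAr Hw Hchp scaler0 subr0.
  by rewrite dotvBr dotvZr Hchd' mulr1 subrr.
have Hdd : dotv d d = 1 by rewrite -norm2_sq Hn expr1n.
set Pd := (1%:M - U *m U^T) *m d.
have PdE : Pd = d - U *m (U^T *m d) by rewrite /Pd mulmxBl mul1mx mulmxA.
have hPd : U^T *m Pd = 0 by rewrite PdE mulmxBr (mulmxA U^T U) hU mul1mx subrr.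
have Hdperp : U^T *m dperp = 0 by rewrite /dperp -scalemxAr hPd scaler0.
have PdPd : dotv Pd Pd = 1 - norm2 (U^T *m d) ^+ 2.
  rewrite {1}PdE dotvBl dotvUl hPd dotv0r subr0 PdE dotvBr dotv_mul Hdd norm2_sq.
  by [].
set nu := norm2 Pd.
have nu2 : nu ^+ 2 = 1 - norm2 (U^T *m d) ^+ 2 by rewrite /nu norm2_sq.
have nupos : 0 < nu.
  rewrite lt_def norm2_ge0 andbT; apply/eqP => /norm2_eq0 H0.
  apply: (hB k Hk); exists (U^T *m d); apply/eqP; rewrite -subr_eq0 -PdE H0 //.
have nuE : Num.sqrt (1 - norm2 (U^T *m d) ^+ 2) = nu by rewrite -nu2 sqrtr_sqr ger0_norm // ltW.
have ddp : dotv d dperp = nu.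
  rewrite /dperp dotvZr -/Pd -/nu.
  have -> : dotv d Pd = dotv Pd Pd by rewrite {2}PdE dotvBl dotvUl hPd dotv0r subr0.
  by rewrite -norm2_sq -/nu expr2 mulrA mulVf ?gt_eqF // mul1r.
have phidp : nu * l1obj D ch <= phi dperp by rewrite -ddp; apply: HB.
have Q0 : l1obj D ch <= phi dperp / nu by rewrite ler_pdivlMr // mulrC.
set Q := phi dperp / nu.
set nd := norm2 (U^T *m d).
set no := norm2 (U^T *m o).
set kappa := infA - supB - no - nd * Q.
have kpos : 0 < kappa.
  have E : dotv o dperp + \sum_(i in I0) `|dotv (col i D) dperp| = phi dperp.
    rewrite /phi dotvC; congr (_ + _); apply: eq_bigr => i _; by rewrite dotvC.
  rewrite nuE E in H2.
  have E2 : 2 * nd / nu * phi dperp = 2 * (nd * Q) by rewrite /Q; ring.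
  rewrite E2 in H2.
  have E3 : infA = infA / 2 + infA / 2 by field.
  have H1b : supB + no < infA / 2 by [].
  rewrite /kappa; lra.
have key : forall y, dotv d y = 1 -> l1obj D ch + kappa * norm2 (U^T *m (y - ch)) <= l1obj D y.
  move=> y Hy.
  set h := y - ch. set x := U^T *m h. set δ := U *m x. set hp := h - δ.
  set nx := norm2 x.
  have hhp : U^T *m hp = 0 by rewrite /hp mulmxBr /δ (mulmxA U^T U) hU mul1mx subrr.
  have hsplit : h = hp + δ by rewrite /hp subrK.
  have bsplit : forall v, dotv h v = dotv hp v + dotv δ v by move=> v; rewrite -dotvDl -hsplit.
  have Gh := l1_glob D ch h.
  have chy : ch + h = y by rewrite /h addrC subrK.
  rewrite chy in Gh.
  rewrite Gdec /phi in Gh.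
  have EIA : \sum_(i in IA) `|dotv h (col i D)| = \sum_(i in IA) `|dotv δ (col i D)|.
    by apply: eq_bigr => i Hi; rewrite bsplit F0 // add0r.
  have Eo : dotv h o = dotv hp o + dotv δ o by apply: bsplit.
  have Fo : - (nx * no) <= dotv δ o.
    rewrite /δ dotvUl lerNl; apply: le_trans (CS x (U^T *m o)); rewrite -normrN ler_norm //.
  have FI0 : \sum_(i in I0) `|dotv hp (col i D)| - \sum_(i in I0) `|dotv δ (col i D)|
             <= \sum_(i in I0) `|dotv h (col i D)|.
    rewrite -sumrB; apply: ler_sum => i _; rewrite bsplit; exact: lerB_normD.
  have Fhp : - (nd * nx * Q) <= phi hp.
    set t := dotv d hp.
    have tE : t = - dotv (U^T *m d) x.
      rewrite /t /hp dotvBr /h dotvBr Hy Hchd' subrr add0r /δ dotv_mul //.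
    have tb : `|t| <= nd * nx by rewrite tE normrN; apply: CS.
    have Hf0 : 0 <= Q by apply: le_trans Q0.
    apply: le_trans (HB hp hhp).
    have a1 : - (`|t| * l1obj D ch) <= t * l1obj D ch.
      rewrite -mulNr ler_wpM2r //; rewrite lerNl -normrN ler_norm //.
    have a2 : `|t| * l1obj D ch <= `|t| * Q by rewrite ler_wpM2l.
    have a3 : `|t| * Q <= nd * nx * Q by rewrite ler_wpM2r.
    rewrite -/t; lra.
  have Finf : nx * infA <= \sum_(i in IA) `|dotv δ (col i D)| by apply: inf_part.
  have Fsup : \sum_(i in I0) `|dotv δ (col i D)| <= nx * supB by apply: sup_part.
  have Ek : kappa * nx = nx * infA - nx * supB - nx * no - nd * nx * Q by rewrite /kappa; ring.
  rewrite mulrC in Ek.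
  rewrite /phi in Fhp.
  lra.
have chmin : forall y, dotv d y = 1 -> l1obj D ch <= l1obj D y.
  move=> y Hy; apply: le_trans (key y Hy); rewrite lerDl; apply: mulr_ge0; [exact: ltW | exact: norm2_ge0].
apply/seteqP; split => c /=.
  move=> [[Hcp Hcd] Hcmin]; split => // y Hy.
  apply: le_trans (chmin y Hy); apply: Hcmin; split => //.
move=> [Hcd Hcmin].
have Hle := Hcmin ch Hchd'.
have Hk2 := key c Hcd.
have n0 : norm2 (U^T *m (c - ch)) = 0.
  have : kappa * norm2 (U^T *m (c - ch)) <= 0 by lra.
  rewrite pmulr_rle0 // => Hn0; apply/eqP; rewrite eq_le Hn0 norm2_ge0.
  by [].
have Hcp : U^T *m c = 0.
  by have := norm2_eq0 n0; rewrite mulmxBr Hchp subr0.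
split; first by split.
by move=> y [_ Hy]; apply: Hcmin.
Qed.
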